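(* Let $\alpha>0$ and $\lambda_1,\dots,\lambda_n,\lambda^*_1,\dots,\lambda^*_n>0$. Let $X_1,\dots,X_n$ be independent with $X_i\sim\mathrm{GE}(\alpha,\lambda_i)$ and $X^*_1,\dots,X^*_n$ independent with $X^*_i\sim\mathrm{GE}(\alpha,\lambda^*_i)$. (a) If $0<\alpha\le1$ and $\sum_{i=1}^{j}\lambda^*_{(i)}\ge\sum_{i=1}^{j}\lambda_{(i)}$ for all $j=1,\dots,n$, then $X_{1:n}\ge_{\rm st}X^*_{1:n}$. (b) If $\alpha\ge1$ and $\sum_{i=j}^{n}\lambda^*_{(i)}\le\sum_{i=j}^{n}\lambda_{(i)}$ for all $j=1,\dots,n$, then $X_{1:n}\le_{\rm st}X^*_{1:n}$.
   Context: $X\sim\mathrm{GE}(\alpha,\lambda)$ means $X$ has distribution function $(1-e^{-\lambda x})^{\alpha}$, $x>0$. $X_{1:n}=\min_i X_i$. $\lambda_{(1)}\le\dots\le\lambda_{(n)}$ are the components in increasing order. $X\le_{\rm st}Y$ means $P(X>x)\le P(Y>x)$ for all $x$. *)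

(* Defs.v *)
From HB Require Import structures.
From mathcomp Require Import all_boot all_order all_algebra.
From mathcomp Require Import all_classical all_reals all_analysis.
Set Implicit Arguments. Unset Strict Implicit. Unset Printing Implicit Defensive.
Import Order.TTheory GRing.Theory Num.Theory.
Local Open Scope classical_set_scope.
Local Open Scope ring_scope.

Definition GE_cdf {R : realType} (alpha lam x : R) : R :=
  if 0 < x then (1 - expR (- (lam * x))) `^ alpha else 0.

Definition has_GE_dist {R : realType} {d} {T : measurableType d}
  (P : probability T R) (X : T -> R) (alpha lam : R) : Prop :=
  forall x : R, P (X @^-1` `]-oo, x]) = (GE_cdf alpha lam x)%:E.

Definition mutually_independent {R : realType} {d} {T : measurableType d} {n : nat}
  (P : probability T R) (X : 'I_n -> T -> R) : Prop :=
  forall (J : {set 'I_n}) (B : 'I_n -> set R),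
    (forall i, measurable (B i)) ->
    P (\bigcap_(i in [set i | i \in J]) (X i @^-1` B i)) =
    (\prod_(i in J) P (X i @^-1` B i))%E.

(* X_{1:n} = min_i X_i (as an extended real; equals a real value when n >= 1). *)
Definition min_rv {R : realType} {T : Type} {n : nat} (X : 'I_n -> T -> R) (t : T)
  : \bar R := (\big[mine/+oo]_(i < n) (X i t)%:E)%E.

Definition survival {R : realType} {d} {T : measurableType d}
  (P : probability T R) (Y : T -> \bar R) (x : R) : \bar R :=
  P [set t | (x%:E < Y t)%E].

Definition st_le {R : realType} {d1 d2} {T1 : measurableType d1} {T2 : measurableType d2}
  (P1 : probability T1 R) (Y1 : T1 -> \bar R) (P2 : probability T2 R) (Y2 : T2 -> \bar R)
  : Prop := forall x : R, (survival P1 Y1 x <= survival P2 Y2 x)%E.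

(* Increasing rearrangement lambda_(1) <= ... <= lambda_(n), 0-indexed. *)
Definition sorted_vec {R : realType} {n : nat} (lam : 'I_n -> R) : seq R :=
  sort <=%R [seq lam i | i <- enum 'I_n].

Definition ord_stat {R : realType} {n : nat} (lam : 'I_n -> R) (i : nat) : R :=
  nth 0 (sorted_vec lam) i.

(* Main.v *)
Require Import Defs.
From HB Require Import structures.
From mathcomp Require Import all_boot all_order all_algebra.
From mathcomp Require Import all_classical all_reals all_analysis.
From mathcomp Require Import ring lra zify.
Import Order.TTheory GRing.Theory Num.Theory.
Import numFieldNormedType.Exports.
Local Open Scope classical_set_scope.
Local Open Scope ring_scope.

Section Calc.
Variable R : realType.

Lemma tangent_cvx (f df : R -> R) (a b : R) :
  (forall y : R, 0 < y -> is_derive y 1 f (df y)) ->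
  (forall y z : R, 0 < y -> y <= z -> df y <= df z) ->
  0 < a -> 0 < b -> f b + df b * (a - b) <= f a.
Proof.
move=> fd dmono a0 b0.
have cont (c d : R) : 0 < c -> {within `[c, d]%classic, continuous f}.
  move=> c0; apply: derivable_within_continuous => y /=.
  rewrite in_itv /= => /andP[cy _].
  by have [] := fd y (lt_le_trans c0 cy).
have fd' (c d : R) : 0 < c -> forall y : R, y \in `]c, d[ -> is_derive y 1 f (df y).
  by move=> c0 y; rewrite in_itv /= => /andP[cy _]; apply: fd; apply: lt_trans cy.
case: (ltgtP a b) => [ab|ba|->]; last by rewrite subrr mulr0 addr0.
- have [c] := MVT ab (fd' _ _ a0) (cont _ _ a0).
  rewrite in_itv /= => /andP[ac cb] E.
  have H : df c <= df b by apply: dmono; [apply: lt_trans ac|apply: ltW].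
  have H2 : 0 <= (df b - df c) * (b - a) by apply: mulr_ge0; rewrite subr_ge0 // ltW.
  nra.
- have [c] := MVT ba (fd' _ _ b0) (cont _ _ b0).
  rewrite in_itv /= => /andP[bc ca] E.
  have H : df b <= df c by apply: dmono; [|apply: ltW].
  have H2 : 0 <= (df c - df b) * (a - b) by apply: mulr_ge0; rewrite subr_ge0 // ltW.
  nra.
Qed.


Lemma powRE (a p : R) : 0 < a -> a `^ p = expR (p * ln a).
Proof. by move=> a0; rewrite /powR gt_eqF. Qed.

Lemma powR_anti (p y z : R) : p <= 0 -> 0 < y -> y <= z -> z `^ p <= y `^ p.
Proof.
move=> p0 y0 yz; rewrite !powRE //; last exact: lt_le_trans yz.
rewrite ler_expR; apply: ler_wnM2l => //.
by rewrite ler_ln // posrE // (lt_le_trans y0 yz).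
Qed.

Lemma slope_cvx (f df : R -> R) (u1 u2 w : R) :
  (forall a b : R, 0 < a -> 0 < b -> f b + df b * (a - b) <= f a) ->
  0 < u1 -> u1 <= u2 -> u2 < w ->
  (f w - f u1) * (w - u2) <= (f w - f u2) * (w - u1).
Proof.
move=> T u10 u12 u2w.
have u20 : 0 < u2 := lt_le_trans u10 u12.
have w0 : 0 < w := lt_trans u20 u2w.
have A := T u1 u2 u10 u20.
have B := T w u2 w0 u20.
have C : 0 <= u2 - u1 by rewrite subr_ge0.
have D : 0 <= w - u2 by rewrite subr_ge0 ltW.
have P1 : 0 <= (df u2 * (u2 - u1) - (f u2 - f u1)) * (w - u2).
  by apply: mulr_ge0 => //; lra.
have P2 : 0 <= ((f w - f u2) - df u2 * (w - u2)) * (u2 - u1).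
  by apply: mulr_ge0 => //; lra.
nra.
Qed.

Lemma pow_tangent_cvx (be : R) : be <= 0 -> forall a b : R, 0 < a -> 0 < b ->
  b `^ be + (be * b `^ (be - 1)) * (a - b) <= a `^ be.
Proof.
move=> be0 a b a0 b0.
have Hd : forall y : R, 0 < y -> is_derive y 1 (fun v : R => v `^ be) (be * y `^ (be - 1)).
  by move=> y y0; exact: (is_derive1_powR be y0).
have Hm : forall y z : R, 0 < y -> y <= z -> be * y `^ (be - 1) <= be * z `^ (be - 1).
  move=> y z y0 yz; apply: ler_wnM2l => //; apply: powR_anti => //; lra.
exact: (tangent_cvx _ _ _ _ Hd Hm a0 b0).
Qed.

Lemma pow_tangent_ccv (be : R) : 0 <= be <= 1 -> forall a b : R, 0 < a -> 0 < b ->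
  - b `^ be + (- (be * b `^ (be - 1))) * (a - b) <= - a `^ be.
Proof.
move=> /andP[be0 be1] a b a0 b0.
have Hd : forall y : R, 0 < y -> is_derive y 1 (fun v : R => - v `^ be) (- (be * y `^ (be - 1))).
  by move=> y y0; apply: is_deriveN; exact: (is_derive1_powR be y0).
have Hm : forall y z : R, 0 < y -> y <= z -> - (be * y `^ (be - 1)) <= - (be * z `^ (be - 1)).
  move=> y z y0 yz; rewrite lerN2; apply: ler_wpM2l => //; apply: powR_anti => //; lra.
exact: (tangent_cvx _ _ _ _ Hd Hm a0 b0).
Qed.

Variables (al x : R).
Hypothesis al0 : 0 < al.
Hypothesis x0 : 0 < x.
Implicit Types l : R.

Definition EE (l : R) := expR (- (l * x)).
Definition UU (l : R) := 1 - EE l.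
Definition gg (l : R) := ln (1 - UU l `^ al).
Definition DD (l : R) := - (al * x) * (UU l `^ (al - 1) * EE l) / (1 - UU l `^ al).

Lemma EE_gt0 l : 0 < EE l. Proof. exact: expR_gt0. Qed.
Lemma EE_lt1 l : 0 < l -> EE l < 1.
Proof. by move=> l0; rewrite /EE expR_lt1 oppr_lt0 mulr_gt0. Qed.
Lemma UU_gt0 l : 0 < l -> 0 < UU l.
Proof. by move=> l0; rewrite /UU subr_gt0 EE_lt1. Qed.
Lemma UU_lt1 l : UU l < 1.
Proof. by rewrite /UU ltrBlDr ltrDl EE_gt0. Qed.
Lemma UUa_lt1 l : 0 < l -> UU l `^ al < 1.
Proof.
move=> l0; rewrite powRE ?UU_gt0 // expR_lt1 pmulr_rlt0 //.
by rewrite ln_lt0 // UU_gt0 // UU_lt1.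
Qed.

Lemma gg_derive l : 0 < l -> is_derive l 1 gg (DD l).
Proof.
move=> l0.
have h1 : is_derive l 1 (fun y => - (y * x)) (- x).
  have := is_deriveZ (- x) (is_derive_id l (1:R)).
  have -> : ((- x) \*: id) = (fun y : R => - (y * x)).
    by apply/funext => y /=; rewrite -[_ *: _]/(_ * _) mulNr mulrC.
  by move=> h; apply: is_derive_eq h _; rewrite -[_%:A]/(_ * 1) mulr1.
have h2 : is_derive l 1 EE (EE l * - x) := is_derive1_comp (is_derive_expR _) h1.
have h3 : is_derive l 1 UU (x * EE l).
  have -> : UU = (cst 1 - EE :> R -> R) by apply/funext.
  by apply: is_derive_eq (is_deriveB (is_derive_cst (1:R) l 1) h2) _; ring.
have h4 : is_derive l 1 (fun y => UU y `^ al) (al * UU l `^ (al - 1) * (x * EE l)).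
  have := (is_derive1_comp (is_derive1_powR al (UU_gt0 _ l0)) h3). by [].
have h5 : is_derive l 1 (fun y => 1 - UU y `^ al) (- (al * UU l `^ (al - 1) * (x * EE l))).
  have -> : (fun y => 1 - UU y `^ al) = (cst 1 - (fun y => UU y `^ al) :> R -> R) by apply/funext.
  by apply: is_derive_eq (is_deriveB (is_derive_cst (1:R) l 1) h4) _; ring.
have h6 := @is_derive1_comp _ (@ln R) (fun y => 1 - UU y `^ al) l _ _ (is_derive1_ln (_ : 0 < 1 - UU l `^ al)) h5.
apply: is_derive_eq (h6 _) _; first by rewrite subr_gt0 UUa_lt1.
by rewrite /DD; ring.
Qed.


Lemma UUw_gt0 l : 0 < l -> 0 < UU l `^ (1 - al).
Proof. by move=> l0; apply: powR_gt0; apply: UU_gt0. Qed.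

Lemma UU_lt_w l : 0 < l -> UU l < UU l `^ (1 - al).
Proof.
move=> l0; have := UUa_lt1 _ l0.
rewrite -(mulr_powRB1 (ltW (UU_gt0 _ l0)) al0) -opprB powRN.
by rewrite ltr_pdivrMr ?UUw_gt0 // mul1r.
Qed.

Lemma DD_alt l : 0 < l ->
  DD l = - (al * x) * (1 - UU l) / (UU l `^ (1 - al) - UU l).
Proof.
move=> l0; rewrite /DD.
have w0 := UUw_gt0 _ l0; have uw := UU_lt_w _ l0.
have -> : UU l `^ al = UU l * (UU l `^ (1 - al))^-1.
  by rewrite -powRN opprB mulr_powRB1 // ltW // UU_gt0.
have -> : UU l `^ (al - 1) = (UU l `^ (1 - al))^-1 by rewrite -powRN opprB.
have -> : EE l = 1 - UU l by rewrite /UU opprB addrC subrK.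
set w := UU l `^ (1 - al); set u := UU l.
field; apply/andP; split; rewrite gt_eqF //; last by rewrite subr_gt0.
Qed.

Lemma UU_mono l1 l2 : l1 <= l2 -> UU l1 <= UU l2.
Proof.
move=> l12; rewrite /UU lerD2l lerN2 /EE ler_expR lerN2.
by apply: ler_wpM2r => //; apply: ltW.
Qed.

Lemma DD_mono_le1 l1 l2 : al <= 1 -> 0 < l1 -> l1 <= l2 -> DD l1 <= DD l2.
Proof.
move=> al1 l10 l12; have l20 := lt_le_trans l10 l12.
rewrite !DD_alt //.
have hb : 0 <= 1 - al <= 1 by rewrite subr_ge0 al1 /= lerBlDr lerDl ltW.
have := UU_lt_w _ l10; have := UU_lt_w _ l20.
have := @slope_cvx (fun v => - v `^ (1 - al)) (fun v => - ((1 - al) * v `^ ((1 - al) - 1)))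
   (UU l1) (UU l2) 1 (pow_tangent_ccv _ hb) (UU_gt0 _ l10) (UU_mono _ _ l12) (UU_lt1 l2).
rewrite powR1 /=.
set u1 := UU l1; set u2 := UU l2; set w1 := UU l1 `^ (1 - al); set w2 := UU l2 `^ (1 - al).
move=> S lt2 lt1.
have d1 : 0 < w1 - u1 by rewrite subr_gt0.
have d2 : 0 < w2 - u2 by rewrite subr_gt0.
have key : (1 - u2) * (w1 - u1) <= (1 - u1) * (w2 - u2) by nra.
rewrite -!mulrA !mulNr lerN2 ler_pM2l ?mulr_gt0 //.
rewrite ler_pdivrMr // mulrAC ler_pdivlMr //.
Qed.


Lemma DD_mono_ge1 l1 l2 : 1 <= al -> 0 < l1 -> l1 <= l2 -> DD l2 <= DD l1.
Proof.
move=> al1 l10 l12; have l20 := lt_le_trans l10 l12.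
rewrite !DD_alt //.
have hb : 1 - al <= 0 by rewrite subr_le0.
have := UU_lt_w _ l10; have := UU_lt_w _ l20.
have := @slope_cvx (fun v => v `^ (1 - al)) (fun v => (1 - al) * v `^ ((1 - al) - 1))
   (UU l1) (UU l2) 1 (pow_tangent_cvx _ hb) (UU_gt0 _ l10) (UU_mono _ _ l12) (UU_lt1 l2).
rewrite powR1 /=.
set u1 := UU l1; set u2 := UU l2; set w1 := UU l1 `^ (1 - al); set w2 := UU l2 `^ (1 - al).
move=> S lt2 lt1.
have d1 : 0 < w1 - u1 by rewrite subr_gt0.
have d2 : 0 < w2 - u2 by rewrite subr_gt0.
have key : (1 - u1) * (w2 - u2) <= (1 - u2) * (w1 - u1).
  rewrite -subr_ge0.
  have -> : (1 - u2) * (w1 - u1) - (1 - u1) * (w2 - u2) = (1 - w2) * (1 - u1) - (1 - w1) * (1 - u2) by ring.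
  by rewrite subr_ge0.
rewrite -!mulrA !mulNr lerN2 ler_pM2l ?mulr_gt0 //.
rewrite ler_pdivrMr // mulrAC ler_pdivlMr //.
Qed.

End Calc.

Section Calc2.
Variable R : realType.
Variables (al x : R).
Hypothesis al0 : 0 < al.
Hypothesis x0 : 0 < x.
Implicit Types l : R.

Lemma DD_le0 l : 0 < l -> (DD R al x) l <= 0.
Proof.
move=> l0; rewrite /DD -mulrA mulNr oppr_le0; apply: mulr_ge0; first by apply: ltW; apply: mulr_gt0.
apply: mulr_ge0; first by apply: mulr_ge0; [apply: powR_ge0 | apply: ltW; apply: EE_gt0].
by rewrite invr_ge0 subr_ge0 ltW // UUa_lt1.
Qed.

Lemma gg_tangent_le1 a b : al <= 1 -> 0 < a -> 0 < b -> (gg R al x) b + (DD R al x) b * (a - b) <= (gg R al x) a.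
Proof.
move=> al1 a0 b0.
have Hd : forall y : R, 0 < y -> is_derive y 1 (gg R al x) ((DD R al x) y).
  move=> y y0; exact: (gg_derive R al x al0 x0 y y0).
have Hm : forall y z : R, 0 < y -> y <= z -> (DD R al x) y <= (DD R al x) z.
  move=> y z y0 yz; exact: (DD_mono_le1 R al x al0 x0 y z al1 y0 yz).
exact: (@tangent_cvx R (gg R al x) (DD R al x) a b Hd Hm a0 b0).
Qed.

Lemma gg_tangent_ge1 a b : 1 <= al -> 0 < a -> 0 < b -> (gg R al x) a <= (gg R al x) b + (DD R al x) b * (a - b).
Proof.
move=> al1 a0 b0.
have Hd : forall y : R, 0 < y -> is_derive y 1 (fun l => - (gg R al x) l) (- (DD R al x) y).
  move=> y y0; exact: (is_deriveN (gg_derive R al x al0 x0 y y0)).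
have Hm : forall y z : R, 0 < y -> y <= z -> - (DD R al x) y <= - (DD R al x) z.
  move=> y z y0 yz; rewrite lerN2; exact: (DD_mono_ge1 R al x al0 x0 y z al1 y0 yz).
have := @tangent_cvx R (fun l => - (gg R al x) l) (fun l => - (DD R al x) l) a b Hd Hm a0 b0.
rewrite /= => H.
rewrite -lerN2 opprD -mulNr; exact: H.
Qed.
End Calc2.

Section Abel.
Variable R : realType.

Lemma abel_pre (N : nat) (c d : nat -> R) :
  (forall i j, (i <= j < N)%N -> c i <= c j) ->
  (forall j, (1 <= j <= N)%N -> 0 <= \sum_(0 <= i < j) d i) ->
  (forall i, (i < N)%N -> c i <= 0) ->
  \sum_(0 <= i < N) c i * d i <= 0.
Proof.
move=> cm dp cn.
have claim : forall k, (k <= N)%N -> forall m, (k <= m.+1)%N -> (m < N)%N ->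
    \sum_(0 <= i < k) c i * d i <= c m * \sum_(0 <= i < k) d i.
  elim=> [|k IH] kN m km mN; first by rewrite !big_geq // mulr0.
  rewrite !big_nat_recr //=.
  have kN' : (k < N)%N by lia.
  apply: (le_trans (lerD (IH (ltnW kN) k (leqnSn k) kN') (lexx _))).
  rewrite -mulrDr; apply: ler_wpM2r.
    by have := dp k.+1; rewrite big_nat_recr //=; apply; lia.
  by apply: cm; lia.
case: N cm dp cn claim => [|N] cm dp cn claim; first by rewrite big_geq.
apply: (le_trans (claim N.+1 (leqnn _) N (leqnn _) (leqnn _))).
by apply: mulr_le0_ge0; [apply: cn | apply: dp]; lia.
Qed.

Lemma abel_suf (N : nat) (c d : nat -> R) :
  (forall i j, (i <= j < N)%N -> c j <= c i) ->
  (forall j, (j < N)%N -> 0 <= \sum_(j <= i < N) d i) ->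
  (forall i, (i < N)%N -> c i <= 0) ->
  \sum_(0 <= i < N) c i * d i <= 0.
Proof.
move=> cm dp cn.
have claim : forall k, (k <= N)%N -> forall m, (m <= N - k)%N -> (m < N)%N ->
    \sum_(N - k <= i < N) c i * d i <= c m * \sum_(N - k <= i < N) d i.
  elim=> [|k IH] kN m km mN; first by rewrite subn0 !big_geq // mulr0.
  have jN : (N - k.+1 < N)%N by lia.
  rewrite !(big_ltn jN).
  have -> : ((N - k.+1).+1 = N - k)%N by lia.
  apply: (le_trans (lerD (lexx _) (IH (ltnW kN) (N - k.+1)%N _ jN))); first by lia.
  rewrite -mulrDr; apply: ler_wpM2r.
    have := dp (N - k.+1)%N jN; rewrite (big_ltn jN).
    by have -> : ((N - k.+1).+1 = N - k)%N by lia.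
  by apply: cm; lia.
case: N cm dp cn claim => [|N] cm dp cn claim; first by rewrite big_geq.
have := claim N.+1 (leqnn _) 0%N (leq0n _) (ltn0Sn _).
rewrite subnn => H; apply: (le_trans H).
by apply: mulr_le0_ge0; [apply: cn | apply: dp].
Qed.

Lemma major_a (N : nat) (a b : nat -> R) (g D : R -> R) :
  (forall p q, 0 < p -> 0 < q -> g q + D q * (p - q) <= g p) ->
  (forall y z, 0 < y -> y <= z -> D y <= D z) ->
  (forall y, 0 < y -> D y <= 0) ->
  (forall i, (i < N)%N -> 0 < a i) -> (forall i, (i < N)%N -> 0 < b i) ->
  (forall i j, (i <= j < N)%N -> b i <= b j) ->
  (forall j, (1 <= j <= N)%N -> \sum_(0 <= i < j) a i <= \sum_(0 <= i < j) b i) ->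
  \sum_(0 <= i < N) g (b i) <= \sum_(0 <= i < N) g (a i).
Proof.
move=> T Dm Dn ap bp bs S.
rewrite -subr_ge0 -sumrB.
have H : \sum_(0 <= i < N) D (b i) * (b i - a i) <= 0.
  apply: abel_pre.
  - by move=> i j /andP[ij jN]; apply: Dm; [apply: bp; lia | apply: bs; lia].
  - by move=> j jN; rewrite sumrB subr_ge0; apply: S.
  - by move=> i iN; apply: Dn; apply: bp.
rewrite -oppr_le0 -sumrN; apply: le_trans H.
rewrite big_nat_cond [X in _ <= X]big_nat_cond; apply: ler_sum => i /andP[/andP[_ iN] _].
have := T (a i) (b i) (ap i iN) (bp i iN); lra.
Qed.

Lemma major_b (N : nat) (a b : nat -> R) (g D : R -> R) :
  (forall p q, 0 < p -> 0 < q -> g p <= g q + D q * (p - q)) ->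
  (forall y z, 0 < y -> y <= z -> D z <= D y) ->
  (forall y, 0 < y -> D y <= 0) ->
  (forall i, (i < N)%N -> 0 < a i) -> (forall i, (i < N)%N -> 0 < b i) ->
  (forall i j, (i <= j < N)%N -> b i <= b j) ->
  (forall j, (j < N)%N -> \sum_(j <= i < N) b i <= \sum_(j <= i < N) a i) ->
  \sum_(0 <= i < N) g (a i) <= \sum_(0 <= i < N) g (b i).
Proof.
move=> T Dm Dn ap bp bs S.
rewrite -subr_ge0 -sumrB.
have H : \sum_(0 <= i < N) D (b i) * (a i - b i) <= 0.
  apply: abel_suf.
  - by move=> i j /andP[ij jN]; apply: Dm; [apply: bp; lia | apply: bs; lia].
  - by move=> j jN; rewrite sumrB subr_ge0; apply: S.
  - by move=> i iN; apply: Dn; apply: bp.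
rewrite -oppr_le0 -sumrN; apply: le_trans H.
rewrite big_nat_cond [X in _ <= X]big_nat_cond; apply: ler_sum => i /andP[/andP[_ iN] _].
have := T (a i) (b i) (ap i iN) (bp i iN); lra.
Qed.

End Abel.

Lemma survival_min (R : realType) (d : measure_display) (T : measurableType d)
  (P : probability T R) (n : nat) (X : 'I_n -> T -> R) (al : R) (lam : 'I_n -> R) :
  (forall i, measurable_fun setT (X i)) -> mutually_independent P X ->
  (forall i, has_GE_dist P (X i) al (lam i)) ->
  forall x, survival P (min_rv X) x = (\prod_(i < n) (1 - GE_cdf al (lam i) x))%:E.
Proof.
move=> mX ind dist x.
rewrite /survival.
have -> : [set t | (x%:E < min_rv X t)%E] =
    \bigcap_(i in [set i | i \in [set: 'I_n]%SET]) (X i @^-1` `]x, +oo[).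
  apply/seteqP; split => t /=.
  - move=> H i _ /=; rewrite in_itv /= andbT -lte_fin.
    apply: (lt_le_trans H); rewrite /min_rv; first [exact: (bigmin_le _ i) | exact: (bigmin_inf i) | exact: (@bigmin_inf _ _ _ _ i _ _ _ isT (lexx _)) ].
  - move=> H; apply: lt_bigmin; first exact: ltry.
    move=> i _.
    have Hi : i \in [set: 'I_n]%SET by rewrite finset.in_setT.
    by have := H i Hi; rewrite /= in_itv /= andbT lte_fin.
rewrite (ind [set: 'I_n]%SET (fun=> `]x, +oo[%classic)); last by move=> i; exact: measurable_itv.
rewrite -prodEFin; rewrite (eq_bigl (fun=> true)); last by move=> i; rewrite finset.in_setT.
apply: eq_bigr => i _.
have -> : X i @^-1` `]x, +oo[ = ~` (X i @^-1` `]-oo, x]).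
  apply/seteqP; split => t /=.
  - rewrite in_itv /= andbT => H H2; move: H2; rewrite /= in_itv /= leNgt H //.
  - move=> H; rewrite in_itv /= andbT ltNge; apply/negP => H2; apply: H.
    by rewrite /= in_itv /=.
rewrite probability_setC; last first.
  by rewrite -[X in measurable X]setTI; apply: (mX i) => //; exact: measurable_itv.
by rewrite dist.
Qed.

Lemma sorted_size {R : realType} {n} (lam : 'I_n -> R) : size (sorted_vec lam) = n.
Proof. by rewrite /sorted_vec size_sort size_map size_enum_ord. Qed.

Lemma sum_sorted {R : realType} {n} (lam : 'I_n -> R) (g : R -> R) :
  \sum_(i < n) g (lam i) = \sum_(0 <= k < n) g (ord_stat lam k).
Proof.
rewrite /ord_stat.
transitivity (\sum_(y <- sorted_vec lam) g y).
  rewrite /sorted_vec (perm_big _ (permEl (perm_sort _ _))) big_map.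
  by rewrite big_enum.
by rewrite (big_nth 0) sorted_size.
Qed.

Lemma ord_stat_in {R : realType} {n} (lam : 'I_n -> R) k : (k < n)%N ->
  exists i, ord_stat lam k = lam i.
Proof.
move=> kn; have : ord_stat lam k \in sorted_vec lam by apply: mem_nth; rewrite sorted_size.
by rewrite /sorted_vec mem_sort => /mapP [i _ ->]; exists i.
Qed.

Lemma ord_stat_sorted {R : realType} {n} (lam : 'I_n -> R) i j : (i <= j < n)%N ->
  ord_stat lam i <= ord_stat lam j.
Proof.
move=> /andP[ij jn]; rewrite /ord_stat.
apply: (le_sorted_leq_nth 0 (sort_sorted (@le_total _ R) _)); rewrite ?inE ?sorted_size //.
exact: leq_ltn_trans jn.
Qed.

Lemma GE_expR (R : realType) (al x l : R) : 0 < al -> 0 < x -> 0 < l ->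
  1 - GE_cdf al l x = expR (gg R al x l).
Proof.
move=> al0 x0 l0.
rewrite /GE_cdf x0.
rewrite /gg lnK //.
rewrite posrE subr_gt0.
exact: (UUa_lt1 R al x al0 x0 l l0).
Qed.

Lemma ord_pos (R : realType) n (mu : 'I_n -> R) : (forall i, 0 < mu i) -> forall k, (k < n)%N -> 0 < ord_stat mu k.
Proof. by move=> mup k kn; have [j ->] := ord_stat_in mu k kn. Qed.

Lemma prod_expR (R : realType) n (al x : R) (mu : 'I_n -> R) : 0 < al -> 0 < x -> (forall i, 0 < mu i) ->
  \prod_(i < n) (1 - GE_cdf al (mu i) x) = expR (\sum_(0 <= k < n) gg R al x (ord_stat mu k)).
Proof.
move=> al0 x0 mup.
rewrite (eq_bigr _ (fun i _ => GE_expR _ _ _ _ al0 x0 (mup i))).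
by rewrite -expR_sum sum_sorted.
Qed.

Lemma prod_le0 (R : realType) n (al x : R) (mu nu : 'I_n -> R) : x <= 0 ->
  \prod_(i < n) (1 - GE_cdf al (mu i) x) <= \prod_(i < n) (1 - GE_cdf al (nu i) x).
Proof.
move=> x0.
have E : forall l, GE_cdf al l x = 0 by move=> l; rewrite /GE_cdf ltNge x0.
have -> : \prod_(i < n) (1 - GE_cdf al (mu i) x) = 1 by apply: big1 => i _; rewrite E subr0.
have -> : \prod_(i < n) (1 - GE_cdf al (nu i) x) = 1 by apply: big1 => i _; rewrite E subr0.
exact: lexx.
Qed.

Lemma real_a (R : realType) n (al x : R) (lam lams : 'I_n -> R) :
  0 < al -> al <= 1 -> (forall i, 0 < lam i) -> (forall i, 0 < lams i) ->
  (forall j : nat, (1 <= j <= n)%N ->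
        \sum_(0 <= i < j) ord_stat lams i >= \sum_(0 <= i < j) ord_stat lam i) ->
  \prod_(i < n) (1 - GE_cdf al (lams i) x) <= \prod_(i < n) (1 - GE_cdf al (lam i) x).
Proof.
move=> al0 al1 lp lsp S.
case: (leP x 0) => [x0|x0]; first exact: (prod_le0 _ _ al x lams lam x0).
rewrite [X in X <= _](prod_expR _ _ _ _ lams al0 x0 lsp).
rewrite [X in _ <= X](prod_expR _ _ _ _ lam al0 x0 lp) ler_expR.
apply: (@major_a R n _ _ (gg R al x) (DD R al x)).
- by move=> p q p0 q0; exact: (gg_tangent_le1 R al x al0 x0 p q al1 p0 q0).
- by move=> y z y0 yz; exact: (DD_mono_le1 R al x al0 x0 y z al1 y0 yz).
- by move=> y y0; exact: (DD_le0 R al x al0 x0 y y0).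
- exact: ord_pos.
- exact: ord_pos.
- by move=> i j ij; apply: ord_stat_sorted.
- exact: S.
Qed.

Lemma real_b (R : realType) n (al x : R) (lam lams : 'I_n -> R) :
  0 < al -> 1 <= al -> (forall i, 0 < lam i) -> (forall i, 0 < lams i) ->
  (forall j : nat, (1 <= j <= n)%N ->
        \sum_(j.-1 <= i < n) ord_stat lams i <= \sum_(j.-1 <= i < n) ord_stat lam i) ->
  \prod_(i < n) (1 - GE_cdf al (lam i) x) <= \prod_(i < n) (1 - GE_cdf al (lams i) x).
Proof.
move=> al0 al1 lp lsp S.
case: (leP x 0) => [x0|x0]; first exact: (prod_le0 _ _ al x lam lams x0).
rewrite [X in X <= _](prod_expR _ _ _ _ lam al0 x0 lp).
rewrite [X in _ <= X](prod_expR _ _ _ _ lams al0 x0 lsp) ler_expR.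
apply: (@major_b R n _ _ (gg R al x) (DD R al x)).
- by move=> p q p0 q0; exact: (gg_tangent_ge1 R al x al0 x0 p q al1 p0 q0).
- by move=> y z y0 yz; exact: (DD_mono_ge1 R al x al0 x0 y z al1 y0 yz).
- by move=> y y0; exact: (DD_le0 R al x al0 x0 y y0).
- exact: ord_pos.
- exact: ord_pos.
- by move=> i j ij; apply: ord_stat_sorted.
- by move=> j jn; have := S j.+1; apply; lia.
Qed.

Theorem mainTheorem12 (R : realType) (n : nat)
  (d1 : measure_display) (T1 : measurableType d1) (P1 : probability T1 R)
  (d2 : measure_display) (T2 : measurableType d2) (P2 : probability T2 R)
  (alpha : R) (lam lams : 'I_n -> R)
  (X : 'I_n -> T1 -> R) (Xs : 'I_n -> T2 -> R) :
  (0 < n)%N ->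
  0 < alpha ->
  (forall i, 0 < lam i) -> (forall i, 0 < lams i) ->
  (forall i, measurable_fun setT (X i)) -> (forall i, measurable_fun setT (Xs i)) ->
  mutually_independent P1 X -> mutually_independent P2 Xs ->
  (forall i, has_GE_dist P1 (X i) alpha (lam i)) ->
  (forall i, has_GE_dist P2 (Xs i) alpha (lams i)) ->
  ((alpha <= 1 ->
     (forall j : nat, (1 <= j <= n)%N ->
        \sum_(0 <= i < j) ord_stat lams i >= \sum_(0 <= i < j) ord_stat lam i) ->
     st_le P2 (min_rv Xs) P1 (min_rv X))
  /\
   (1 <= alpha ->
     (forall j : nat, (1 <= j <= n)%N ->
        \sum_(j.-1 <= i < n) ord_stat lams i <= \sum_(j.-1 <= i < n) ord_stat lam i) ->
     st_le P1 (min_rv X) P2 (min_rv Xs))).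
Proof.
move=> n0 al0 lp lsp mX mXs iX iXs dX dXs.
split.
- move=> al1 S x.
  rewrite [X in (X <= _)%E](survival_min _ _ _ _ _ _ _ _ mXs iXs dXs).
  rewrite [X in (_ <= X)%E](survival_min _ _ _ _ _ _ _ _ mX iX dX) lee_fin.
  exact: real_a.
- move=> al1 S x.
  rewrite [X in (X <= _)%E](survival_min _ _ _ _ _ _ _ _ mX iX dX).
  rewrite [X in (_ <= X)%E](survival_min _ _ _ _ _ _ _ _ mXs iXs dXs) lee_fin.
  exact: real_b.
Qed.
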